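(* Every real hypersurface $M^3$ in $\mathbb{C}P^2$ or $\mathbb{C}H^2$ satisfies $\langle S^*X,Y\rangle=\frac{\rho^*}{2}\langle X,Y\rangle$ for all $X,Y\in W^\perp$, with $$\frac{\rho^*}{2}=4c+\lambda\nu-\mu^2,$$ where, at each point, $X_0\in W^\perp$ is a unit vector with $\langle AW,\varphi X_0\rangle=0$ (e.g. $X_0$ the unit vector with $AW=\alpha W+\beta X_0$, $\beta>0$, where $AW\ne\alpha W$), $Y_0=\varphi X_0$, $\lambda=\langle AX_0,X_0\rangle$, $\mu=\langle AX_0,Y_0\rangle$, $\nu=\langle AY_0,Y_0\rangle$.
   Context: $\mathbb{C}P^2$, $\mathbb{C}H^2$ carry Kähler metrics of constant holomorphic sectional curvature $4c\ne0$, complex structure $J$, connection $\widetilde\nabla$. For a real hypersurface $M$ with unit normal $\xi$: $W$ with $JW=\xi$; $W^\perp$ the holomorphic distribution; $\varphi X=JX-\langle X,W\rangle\xi$; $AX=-\widetilde\nabla_X\xi$; $\alpha=\langle AW,W\rangle$; $R$ the curvature tensor of $M$ ($R(X,Y)=\nabla_X\nabla_Y-\nabla_Y\nabla_X-\nabla_{[X,Y]}$). The *-Ricci tensor $S^*$ is defined by $\langle S^*X,Y\rangle=\tfrac12\operatorname{trace}\{Z\mapsto\varphi R(X,\varphi Y)Z\}$ and $\rho^*=\operatorname{trace}S^*$. *)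

(* Defs.v *)
(* Pointwise (linear-algebraic) model of a real hypersurface
   M^3 in CP^2 / CH^2 at a point p. *)
From HB Require Import structures.
From mathcomp Require Import all_boot all_order all_algebra.
Set Implicit Arguments. Unset Strict Implicit. Unset Printing Implicit Defensive.
Import Order.TTheory GRing.Theory Num.Theory.
Local Open Scope ring_scope.

Section Defs.
Variable R : realFieldType.
Notation V := 'rV[R]_4.   (* tangent space of the ambient space at p *)

Definition ip (u v : V) : R := (u *m v^T) 0 0.

(* J is the complex structure (acting on row vectors: Jv = v *m J) *)
Definition cplx_structure (J : 'M[R]_4) : Prop :=
  J *m J = - 1%:M /\ J *m J^T = 1%:M.

(* tangent space T_pM = xi^perp, orthogonal projection onto it *)
Definition tangent (xi X : V) : Prop := ip X xi = 0.
Definition tproj (xi v : V) : V := v - ip v xi *: xi.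

(* W with JW = xi *)
Definition Wvec (J : 'M[R]_4) (xi : V) : V := - (xi *m J).

Definition phi (J : 'M[R]_4) (xi X : V) : V := X *m J - ip X (Wvec J xi) *: xi.

(* curvature tensor of constant holomorphic sectional curvature 4c,
   convention R(X,Y) = [nabla_X,nabla_Y] - nabla_[X,Y] *)
Definition Ramb (c : R) (J : 'M[R]_4) (X Y Z : V) : V :=
  c *: (ip Y Z *: X - ip X Z *: Y + ip (Y *m J) Z *: (X *m J)
        - ip (X *m J) Z *: (Y *m J) - (2 * ip (X *m J) Y) *: (Z *m J)).

(* curvature tensor of M (Gauss equation), for X Y Z tangent;
   A is the shape operator, acting as X |-> X *m A on tangent vectors *)
Definition Rhyp (c : R) (J A : 'M[R]_4) (xi X Y Z : V) : V :=
  tproj xi (Ramb c J X Y Z) + ip (Y *m A) Z *: (X *m A)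
  - ip (X *m A) Z *: (Y *m A).

(* <S* X, Y> = 1/2 trace_{T_pM} (Z |-> phi R(X, phi Y) Z);
   trace over T_pM computed as trace of the composite with tproj on V,
   using the standard orthonormal basis of V *)
Definition stars (c : R) (J A : 'M[R]_4) (xi X Y : V) : R :=
  2^-1 * \sum_(i < 4)
    ip (phi J xi (Rhyp c J A xi X (phi J xi Y) (tproj xi (delta_mx 0 i))))
       (delta_mx 0 i).

Definition rhostar (c : R) (J A : 'M[R]_4) (xi : V) : R :=
  \sum_(i < 4) stars c J A xi (tproj xi (delta_mx 0 i)) (tproj xi (delta_mx 0 i)).

End Defs.

(* Main.v *)
Require Import Defs.
From HB Require Import structures.
From mathcomp Require Import all_boot all_order all_algebra.
From mathcomp Require Import ring lra.
Set Implicit Arguments. Unset Strict Implicit. Unset Printing Implicit Defensive.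
Import Order.TTheory GRing.Theory Num.Theory.
Local Open Scope ring_scope.

Section P.
Variable R : realFieldType.
Local Notation V := 'rV[R]_4.
Implicit Types u v w : V.

Lemma ipE u v : ip u v = \sum_i u 0 i * v 0 i.
Proof. by rewrite /ip mxE; apply: eq_bigr => i _; rewrite mxE. Qed.
Lemma ipC u v : ip u v = ip v u.
Proof. by rewrite !ipE; apply: eq_bigr => i _; rewrite mulrC. Qed.
Lemma ipDl u v w : ip (u + v) w = ip u w + ip v w.
Proof. by rewrite /ip mulmxDl mxE. Qed.
Lemma ipZl k u v : ip (k *: u) v = k * ip u v.
Proof. by rewrite /ip -scalemxAl mxE. Qed.
Lemma ipNl u v : ip (- u) v = - ip u v.
Proof. by rewrite -scaleN1r ipZl mulN1r. Qed.
Lemma ipDr u v w : ip w (u + v) = ip w u + ip w v.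
Proof. by rewrite ipC ipDl !(ipC w). Qed.
Lemma ipZr k u v : ip v (k *: u) = k * ip v u.
Proof. by rewrite ipC ipZl ipC. Qed.
Lemma ipNr u v : ip v (- u) = - ip v u.
Proof. by rewrite ipC ipNl ipC. Qed.
Lemma ipdelta i v : ip (delta_mx 0 i) v = v 0 i.
Proof. by rewrite /ip -rowE !mxE. Qed.

Variables (c : R) (J A : 'M[R]_4) (xi X0 : V).
Hypothesis HJ : cplx_structure J.
Hypothesis Hxi : ip xi xi = 1.
Hypothesis HAt : forall X, tangent xi X -> tangent xi (X *m A).
Hypothesis HAs : forall X Y, tangent xi X -> tangent xi Y -> ip (X *m A) Y = ip X (Y *m A).
Hypothesis HX0t : tangent xi X0.
Hypothesis HX0W : ip X0 (Wvec J xi) = 0.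
Hypothesis HX0n : ip X0 X0 = 1.
Hypothesis HWA : ip (Wvec J xi *m A) (phi J xi X0) = 0.

Lemma JJ : J *m J = - 1%:M. Proof. by case: HJ. Qed.
Lemma Jt : J^T = - J.
Proof.
case: HJ => h1 h2.
by rewrite -[J^T]mul1mx -[1%:M]opprK -h1 mulNmx -mulmxA h2 mulmx1.
Qed.
Lemma ipJl u v : ip (u *m J) v = - ip u (v *m J).
Proof. by rewrite /ip trmx_mul Jt mulNmx mulmxN mulmxA [in RHS]mxE opprK. Qed.
Lemma ipJJ u v : ip (u *m J) (v *m J) = ip u v.
Proof. by rewrite ipJl -mulmxA JJ mulmxN mulmx1 ipNr opprK. Qed.
Lemma ipJ0 u : ip (u *m J) u = 0.
Proof. have h := ipJl u u; rewrite ipC in h; rewrite ipC; lra. Qed.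

Local Notation W := (Wvec J xi).
Definition Y0 := X0 *m J.

Lemma xiJ : xi *m J = - W. Proof. by rewrite /Wvec opprK. Qed.
Lemma WJ : W *m J = xi. Proof. by rewrite /Wvec mulNmx -mulmxA JJ mulmxN mulmx1 opprK. Qed.
Lemma Y0J : Y0 *m J = - X0. Proof. by rewrite /Y0 -mulmxA JJ mulmxN mulmx1. Qed.
Lemma phiX0 : phi J xi X0 = Y0. Proof. by rewrite /phi HX0W scale0r subr0. Qed.

Lemma o00 : ip xi xi = 1. Proof. exact: Hxi. Qed.
Lemma o01 : ip xi W = 0. Proof. by rewrite /Wvec ipNr ipC ipJ0 oppr0. Qed.
Lemma o02 : ip xi X0 = 0. Proof. by rewrite ipC; exact: HX0t. Qed.
Lemma o03 : ip xi Y0 = 0. Proof. by rewrite /Y0 ipC ipJl xiJ ipNr opprK HX0W. Qed.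
Lemma o11 : ip W W = 1. Proof. by rewrite /Wvec ipNl ipNr opprK ipJJ. Qed.
Lemma o12 : ip W X0 = 0. Proof. by rewrite ipC. Qed.
Lemma o13 : ip W Y0 = 0. Proof. by rewrite /Wvec /Y0 ipNl ipJJ o02 oppr0. Qed.
Lemma o22 : ip X0 X0 = 1. Proof. exact: HX0n. Qed.
Lemma o23 : ip X0 Y0 = 0. Proof. by rewrite ipC /Y0 ipJ0. Qed.
Lemma o33 : ip Y0 Y0 = 1. Proof. by rewrite /Y0 ipJJ. Qed.
Definition oall := (o00, o01, o02, o03, o11, o12, o13, o22, o23, o33).
Lemma oC u v : ip u v = ip v u. Proof. exact: ipC. Qed.


Definition mk_def (a0 a1 a2 a3 : R) : V := a0 *: xi + a1 *: W + a2 *: X0 + a3 *: Y0.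
Fact mk_key : unit. Proof. by []. Qed.
Definition mk := locked_with mk_key mk_def.
Lemma mkU a0 a1 a2 a3 : mk a0 a1 a2 a3 = a0 *: xi + a1 *: W + a2 *: X0 + a3 *: Y0.
Proof. by rewrite [mk]unlock. Qed.

Definition fs := [:: xi; W; X0; Y0].
Definition FF : 'M[R]_4 := \matrix_(i < 4, j < 4) (nth 0 fs i) 0 j.

Lemma FFt : FF *m FF^T = 1%:M.
Proof.
apply/matrixP => i k.
have -> : (FF *m FF^T) i k = ip (nth 0 fs i) (nth 0 fs k).
  by rewrite !mxE ipE; apply: eq_bigr => j _; rewrite !mxE.
rewrite !mxE.
case: i => [[|[|[|[|i]]]] Hi] //; case: k => [[|[|[|[|k]]]] Hk] //=;
  rewrite ?oall // ?(oC W xi) ?(oC X0 xi) ?(oC Y0 xi) ?(oC X0 W) ?(oC Y0 W) ?(oC Y0 X0) ?oall //.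
Qed.

Lemma rowFF j : row j FF = nth 0 fs j.
Proof. by apply/rowP => k; rewrite !mxE. Qed.
Lemma vFF v j : (v *m FF^T) 0 j = ip v (nth 0 fs j).
Proof. by rewrite mxE ipE; apply: eq_bigr => k _; rewrite !mxE. Qed.

Lemma decomp v : v = mk (ip v xi) (ip v W) (ip v X0) (ip v Y0).
Proof.
have h : FF^T *m FF = 1%:M by apply: mulmx1C; exact: FFt.
rewrite -{1}[v]mulmx1 -h mulmxA mulmx_sum_row !big_ord_recr big_ord0 /= add0r.
by rewrite !rowFF !vFF mkU.
Qed.


Lemma mkE a0 a1 a2 a3 k : (mk a0 a1 a2 a3) 0 k = a0 * xi 0 k + a1 * W 0 k + a2 * X0 0 k + a3 * Y0 0 k.
Proof. by rewrite !mkU !mxE. Qed.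

Lemma mkD a0 a1 a2 a3 b0 b1 b2 b3 :
  mk a0 a1 a2 a3 + mk b0 b1 b2 b3 = mk (a0 + b0) (a1 + b1) (a2 + b2) (a3 + b3).
Proof. apply/rowP => k; rewrite mxE !mkE; ring. Qed.
Lemma mkN a0 a1 a2 a3 : - mk a0 a1 a2 a3 = mk (- a0) (- a1) (- a2) (- a3).
Proof. apply/rowP => k; rewrite mxE !mkE; ring. Qed.
Lemma mkZ k a0 a1 a2 a3 : k *: mk a0 a1 a2 a3 = mk (k * a0) (k * a1) (k * a2) (k * a3).
Proof. apply/rowP => i; rewrite mxE !mkE; ring. Qed.

Lemma ipmk a0 a1 a2 a3 b0 b1 b2 b3 :
  ip (mk a0 a1 a2 a3) (mk b0 b1 b2 b3) = a0 * b0 + a1 * b1 + a2 * b2 + a3 * b3.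
Proof.
rewrite !mkU !ipDl !ipDr !ipZl !ipZr ?(oC W xi) ?(oC X0 xi) ?(oC Y0 xi) ?(oC X0 W) ?(oC Y0 W) ?(oC Y0 X0) !oall.
ring.
Qed.

Lemma mkJ a0 a1 a2 a3 : mk a0 a1 a2 a3 *m J = mk a1 (- a0) (- a3) a2.
Proof.
rewrite !mkU !mulmxDl -!scalemxAl xiJ WJ Y0J -/Y0.
apply/rowP => k; rewrite !mxE; ring.
Qed.

Local Notation p0 := (ip (xi *m A) xi).
Local Notation p1 := (ip (xi *m A) W).
Local Notation p2 := (ip (xi *m A) X0).
Local Notation p3 := (ip (xi *m A) Y0).
Local Notation s11 := (ip (W *m A) W).
Local Notation s12 := (ip (W *m A) X0).
Local Notation s22 := (ip (X0 *m A) X0).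
Local Notation s23 := (ip (X0 *m A) Y0).
Local Notation s33 := (ip (Y0 *m A) Y0).

Lemma tW : tangent xi W. Proof. by rewrite /tangent oC o01. Qed.
Lemma tY0 : tangent xi Y0. Proof. by rewrite /tangent oC o03. Qed.

Lemma WA : W *m A = mk 0 s11 s12 0.
Proof.
rewrite {1}(decomp (W *m A)).
have -> : ip (W *m A) xi = 0 by exact: HAt tW.
have -> : ip (W *m A) Y0 = 0 by rewrite -phiX0.
by [].
Qed.
Lemma X0A : X0 *m A = mk 0 s12 s22 s23.
Proof.
rewrite {1}(decomp (X0 *m A)).
have -> : ip (X0 *m A) xi = 0 by exact: HAt HX0t.
by rewrite (HAs HX0t tW) (oC X0).
Qed.
Lemma Y0A : Y0 *m A = mk 0 0 s23 s33.
Proof.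
rewrite {1}(decomp (Y0 *m A)).
have -> : ip (Y0 *m A) xi = 0 by exact: HAt tY0.
rewrite (HAs tY0 tW) (HAs tY0 HX0t) (oC Y0) (oC Y0).
have -> : ip (W *m A) Y0 = 0 by rewrite -phiX0.
by [].
Qed.

Lemma mkA a0 a1 a2 a3 : mk a0 a1 a2 a3 *m A =
  mk (a0 * p0) (a0 * p1 + a1 * s11 + a2 * s12)
     (a0 * p2 + a1 * s12 + a2 * s22 + a3 * s23) (a0 * p3 + a2 * s23 + a3 * s33).
Proof.
rewrite [in LHS]mkU !mulmxDl -!scalemxAl [in LHS]WA [in LHS]X0A [in LHS]Y0A {1}(decomp (xi *m A)).
rewrite !mkZ !mkD; congr mk; ring.
Qed.

Lemma tprojmk a0 a1 a2 a3 : tproj xi (mk a0 a1 a2 a3) = mk 0 a1 a2 a3.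
Proof.
rewrite /tproj.
have -> : ip (mk a0 a1 a2 a3) xi = a0.
  have -> : xi = mk 1 0 0 0 by apply/rowP => k; rewrite !mkU !mxE; ring.
  by rewrite ipmk; ring.
apply/rowP => k; rewrite !mkU !mxE; ring.
Qed.

Lemma phimk a0 a1 a2 a3 : phi J xi (mk a0 a1 a2 a3) = mk 0 (- a0) (- a3) a2.
Proof.
rewrite /phi mkJ.
have -> : ip (mk a0 a1 a2 a3) W = a1.
  have -> : W = mk 0 1 0 0 by apply/rowP => k; rewrite !mkU !mxE; ring.
  by rewrite ipmk; ring.
apply/rowP => k; rewrite !mkU !mxE; ring.
Qed.


Lemma ipdeltar i v : ip v (delta_mx 0 i) = v 0 i.
Proof. by rewrite ipC ipdelta. Qed.

Lemma trace_lin (T : V -> V) :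
  (forall u v, T (u + v) = T u + T v) -> (forall k u, T (k *: u) = k *: T u) ->
  \sum_(i < 4) ip (T (delta_mx 0 i)) (delta_mx 0 i) =
  ip (T xi) xi + ip (T W) W + ip (T X0) X0 + ip (T Y0) Y0.
Proof.
move=> HD HZ.
have E i : T (delta_mx 0 i) = xi 0 i *: T xi + W 0 i *: T W + X0 0 i *: T X0 + Y0 0 i *: T Y0.
  by rewrite {1}(decomp (delta_mx 0 i)) mkU !ipdelta !HD !HZ.
rewrite (eq_bigr (fun i => xi 0 i * (T xi) 0 i + W 0 i * (T W) 0 i + X0 0 i * (T X0) 0 i + Y0 0 i * (T Y0) 0 i)); last first.
  by move=> i _; rewrite E !ipDl !ipZl !ipdeltar.
rewrite !ipE !big_ord_recr !big_ord0 /=; ring.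
Qed.

Lemma trace_bil (B : V -> V -> R) :
  (forall u v w, B (u + v) w = B u w + B v w) -> (forall k u w, B (k *: u) w = k * B u w) ->
  (forall u v w, B w (u + v) = B w u + B w v) -> (forall k u w, B w (k *: u) = k * B w u) ->
  \sum_(i < 4) B (delta_mx 0 i) (delta_mx 0 i) = B xi xi + B W W + B X0 X0 + B Y0 Y0.
Proof.
move=> HDl HZl HDr HZr.
rewrite (eq_bigr (fun i => let c0 := xi 0 i in let c1 := W 0 i in let c2 := X0 0 i in let c3 := Y0 0 i in
   c0 * (c0 * B xi xi + c1 * B xi W + c2 * B xi X0 + c3 * B xi Y0) +
   c1 * (c0 * B W xi + c1 * B W W + c2 * B W X0 + c3 * B W Y0) +
   c2 * (c0 * B X0 xi + c1 * B X0 W + c2 * B X0 X0 + c3 * B X0 Y0) +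
   c3 * (c0 * B Y0 xi + c1 * B Y0 W + c2 * B Y0 X0 + c3 * B Y0 Y0))); last first.
  by move=> i _; rewrite (decomp (delta_mx 0 i)) mkU !ipdelta !HDl !HZl !HDr !HZr.
transitivity (B xi xi * ip xi xi + B xi W * ip xi W + B xi X0 * ip xi X0 + B xi Y0 * ip xi Y0 + B W xi * ip W xi + B W W * ip W W + B W X0 * ip W X0 + B W Y0 * ip W Y0 + B X0 xi * ip X0 xi + B X0 W * ip X0 W + B X0 X0 * ip X0 X0 + B X0 Y0 * ip X0 Y0 + B Y0 xi * ip Y0 xi + B Y0 W * ip Y0 W + B Y0 X0 * ip Y0 X0 + B Y0 Y0 * ip Y0 Y0).
  rewrite !ipE !big_ord_recr !big_ord0 /=; ring.
rewrite ?(oC W xi) ?(oC X0 xi) ?(oC Y0 xi) ?(oC X0 W) ?(oC Y0 W) ?(oC Y0 X0) !oall; ring.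
Qed.

Ltac lin := rewrite /Rhyp /Ramb /tproj /phi;
  do 3 rewrite ?(mulmxDl, mulNmx, ipDl, ipDr, ipNl, ipNr, ipZl, ipZr) -?scalemxAl;
  apply/rowP => k; rewrite !mxE; ring.

Lemma phiD u v : phi J xi (u + v) = phi J xi u + phi J xi v. Proof. lin. Qed.
Lemma phiZ a u : phi J xi (a *: u) = a *: phi J xi u. Proof. lin. Qed.
Lemma tprojD u v : tproj xi (u + v) = tproj xi u + tproj xi v. Proof. lin. Qed.
Lemma tprojZ a u : tproj xi (a *: u) = a *: tproj xi u. Proof. lin. Qed.
Lemma RhypDx u v Y Z : Rhyp c J A xi (u + v) Y Z = Rhyp c J A xi u Y Z + Rhyp c J A xi v Y Z. Proof. lin. Qed.
Lemma RhypZx a u Y Z : Rhyp c J A xi (a *: u) Y Z = a *: Rhyp c J A xi u Y Z. Proof. lin. Qed.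
Lemma RhypDy u v X Z : Rhyp c J A xi X (u + v) Z = Rhyp c J A xi X u Z + Rhyp c J A xi X v Z. Proof. lin. Qed.
Lemma RhypZy a u X Z : Rhyp c J A xi X (a *: u) Z = a *: Rhyp c J A xi X u Z. Proof. lin. Qed.
Lemma RhypDz u v X Y : Rhyp c J A xi X Y (u + v) = Rhyp c J A xi X Y u + Rhyp c J A xi X Y v. Proof. lin. Qed.
Lemma RhypZz a u X Y : Rhyp c J A xi X Y (a *: u) = a *: Rhyp c J A xi X Y u. Proof. lin. Qed.


Lemma starsDl X X' Y : stars c J A xi (X + X') Y = stars c J A xi X Y + stars c J A xi X' Y.
Proof.
rewrite /stars -mulrDr -big_split; congr (_ * _); apply: eq_bigr => i _.
by rewrite RhypDx phiD ipDl.
Qed.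
Lemma starsZl a X Y : stars c J A xi (a *: X) Y = a * stars c J A xi X Y.
Proof.
rewrite /stars [RHS]mulrCA [in RHS]mulr_sumr; congr (_ * _); apply: eq_bigr => i _.
by rewrite RhypZx phiZ ipZl.
Qed.
Lemma starsDr X Y Y' : stars c J A xi X (Y + Y') = stars c J A xi X Y + stars c J A xi X Y'.
Proof.
rewrite /stars -mulrDr -big_split; congr (_ * _); apply: eq_bigr => i _.
by rewrite phiD RhypDy phiD ipDl.
Qed.
Lemma starsZr a X Y : stars c J A xi X (a *: Y) = a * stars c J A xi X Y.
Proof.
rewrite /stars [RHS]mulrCA [in RHS]mulr_sumr; congr (_ * _); apply: eq_bigr => i _.
by rewrite phiZ RhypZy phiZ ipZl.
Qed.

Lemma e0 : xi = mk 1 0 0 0. Proof. by apply/rowP => k; rewrite mkU !mxE; ring. Qed.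
Lemma e1 : W = mk 0 1 0 0. Proof. by apply/rowP => k; rewrite mkU !mxE; ring. Qed.
Lemma e2 : X0 = mk 0 0 1 0. Proof. by apply/rowP => k; rewrite mkU !mxE; ring. Qed.
Lemma e3 : Y0 = mk 0 0 0 1. Proof. by apply/rowP => k; rewrite mkU !mxE; ring. Qed.

Lemma starsF X Y : stars c J A xi X Y = 2^-1 *
  (ip (phi J xi (Rhyp c J A xi X (phi J xi Y) (tproj xi (mk 1 0 0 0))))  (mk 1 0 0 0) +
   ip (phi J xi (Rhyp c J A xi X (phi J xi Y) (tproj xi (mk 0 1 0 0))))  (mk 0 1 0 0) +
   ip (phi J xi (Rhyp c J A xi X (phi J xi Y) (tproj xi (mk 0 0 1 0))))  (mk 0 0 1 0) +
   ip (phi J xi (Rhyp c J A xi X (phi J xi Y) (tproj xi (mk 0 0 0 1))))  (mk 0 0 0 1)).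
Proof.
rewrite -e0 -e1 -e2 -e3 /stars; congr (_ * _).
apply: (trace_lin (T := fun u => phi J xi (Rhyp c J A xi X (phi J xi Y) (tproj xi u)))).
  by move=> u v; rewrite tprojD RhypDz phiD.
by move=> a u; rewrite tprojZ RhypZz phiZ.
Qed.

Lemma rhostarF : rhostar c J A xi =
  stars c J A xi (tproj xi (mk 1 0 0 0)) (tproj xi (mk 1 0 0 0)) +
  stars c J A xi (tproj xi (mk 0 1 0 0)) (tproj xi (mk 0 1 0 0)) +
  stars c J A xi (tproj xi (mk 0 0 1 0)) (tproj xi (mk 0 0 1 0)) +
  stars c J A xi (tproj xi (mk 0 0 0 1)) (tproj xi (mk 0 0 0 1)).
Proof.
rewrite -e0 -e1 -e2 -e3 /rhostar.
apply: (trace_bil (B := fun u v => stars c J A xi (tproj xi u) (tproj xi v))).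
- by move=> u v w; rewrite tprojD starsDl.
- by move=> a u w; rewrite tprojZ starsZl.
- by move=> u v w; rewrite tprojD starsDr.
- by move=> a u w; rewrite tprojZ starsZr.
Qed.

Ltac mkred := rewrite ?(phimk, tprojmk, mkJ, mkA, ipmk, mkZ, mkN, mkD).

Definition KK := 4 * c + s22 * s33 - s23 ^+ 2.

Lemma v00 : stars c J A xi (mk 0 0 0 0) (mk 0 0 0 0) = 0.
Proof. rewrite starsF /Rhyp /Ramb; mkred; field; rewrite ?pnatr_eq0 //. Qed.
Lemma v11 : stars c J A xi (mk 0 1 0 0) (mk 0 1 0 0) = 0.
Proof. rewrite starsF /Rhyp /Ramb; mkred; field; rewrite ?pnatr_eq0 //. Qed.
Lemma v22 : stars c J A xi (mk 0 0 1 0) (mk 0 0 1 0) = KK.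
Proof. rewrite /KK starsF /Rhyp /Ramb; mkred; field; rewrite ?pnatr_eq0 //. Qed.
Lemma v33 : stars c J A xi (mk 0 0 0 1) (mk 0 0 0 1) = KK.
Proof. rewrite /KK starsF /Rhyp /Ramb; mkred; field; rewrite ?pnatr_eq0 //. Qed.
Lemma v23 : stars c J A xi (mk 0 0 1 0) (mk 0 0 0 1) = 0.
Proof. rewrite starsF /Rhyp /Ramb; mkred; field; rewrite ?pnatr_eq0 //. Qed.
Lemma v32 : stars c J A xi (mk 0 0 0 1) (mk 0 0 1 0) = 0.
Proof. rewrite starsF /Rhyp /Ramb; mkred; field; rewrite ?pnatr_eq0 //. Qed.


Lemma main_sec :
  let Y0 := phi J xi X0 in
  let lambda := ip (X0 *m A) X0 in
  let mu := ip (X0 *m A) Y0 in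
  let nu := ip (Y0 *m A) Y0 in
  (forall X Y, tangent xi X -> ip X (Wvec J xi) = 0 ->
               tangent xi Y -> ip Y (Wvec J xi) = 0 ->
     stars c J A xi X Y = rhostar c J A xi / 2 * ip X Y) /\
  rhostar c J A xi / 2 = 4 * c + lambda * nu - mu ^+ 2.
Proof.
have HK : rhostar c J A xi / 2 = KK.
  rewrite rhostarF !tprojmk v00 v11 v22 v33; field; rewrite ?pnatr_eq0 //.
move=> Y0' lambda mu nu; rewrite /lambda /mu /nu /Y0' phiX0 HK.
split; last by [].
move=> X Y HXt HXW HYt HYW.
have HXt' : ip X xi = 0 := HXt.
have HYt' : ip Y xi = 0 := HYt.
have eX : X = ip X X0 *: mk 0 0 1 0 + ip X Y0 *: mk 0 0 0 1.
  by rewrite {1}(decomp X) HXt' HXW !mkZ mkD; congr mk; ring.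
have eY : Y = ip Y X0 *: mk 0 0 1 0 + ip Y Y0 *: mk 0 0 0 1.
  by rewrite {1}(decomp Y) HYt' HYW !mkZ mkD; congr mk; ring.
rewrite eX eY !starsDl !starsDr !starsZl !starsZr v22 v33 v23 v32 !mkZ !mkD ipmk.
ring.
Qed.

End P.

Theorem proposition14 (R : realFieldType) (c : R) (J A : 'M[R]_4)
    (xi X0 : 'rV[R]_4) :
  c != 0 ->
  cplx_structure J ->
  ip xi xi = 1 ->
  (forall X, tangent xi X -> tangent xi (X *m A)) ->
  (forall X Y, tangent xi X -> tangent xi Y -> ip (X *m A) Y = ip X (Y *m A)) ->
  tangent xi X0 -> ip X0 (Wvec J xi) = 0 -> ip X0 X0 = 1 ->
  ip (Wvec J xi *m A) (phi J xi X0) = 0 ->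
  let Y0 := phi J xi X0 in
  let lambda := ip (X0 *m A) X0 in
  let mu := ip (X0 *m A) Y0 in
  let nu := ip (Y0 *m A) Y0 in
  (forall X Y, tangent xi X -> ip X (Wvec J xi) = 0 ->
               tangent xi Y -> ip Y (Wvec J xi) = 0 ->
     stars c J A xi X Y = rhostar c J A xi / 2 * ip X Y) /\
  rhostar c J A xi / 2 = 4 * c + lambda * nu - mu ^+ 2.
Proof.
move=> _ HJ Hxi HAt HAs HX0t HX0W HX0n HWA.
by apply: main_sec.
Qed.
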